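(* Let $F$ be a field of characteristic two, let $\mathfrak b$ be a $4$-dimensional isotropic symmetric bilinear form over $F$, and let $K=F(\sqrt\alpha)$ for some $\alpha\in F^\times\setminus F^{\times2}$. If $\mathfrak b\otimes\langle\!\langle\alpha\rangle\!\rangle$ is (isometric to) a bilinear Pfister form, then $\mathfrak b_K$ is similar to a bilinear Pfister form.
   Context: $\langle\!\langle\alpha\rangle\!\rangle=\langle1,\alpha\rangle$; a bilinear Pfister form is a form $\langle1,\alpha_1\rangle\otimes\cdots\otimes\langle1,\alpha_n\rangle$ with $\alpha_i\in F^\times$. Two forms are similar if one is isometric to a nonzero scalar multiple of the other. $\mathfrak b_K$ is the scalar extension to $K$. *)

(* Defs.v *)
(* Symmetric bilinear forms of dimension n over a field are
   represented by their Gram matrices 'M[F]_n (b(x,y) = x *m B *m y^T). *)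
From HB Require Import structures.
From mathcomp Require Import all_boot all_order all_algebra all_field.
From mathcomp Require Import mxtens.
Set Implicit Arguments. Unset Strict Implicit. Unset Printing Implicit Defensive.
Import Order.TTheory GRing.Theory.
Local Open Scope ring_scope.

Section BilForms.
Variable F : fieldType.

Definition bf_symmetric n (B : 'M[F]_n) : Prop := B^T = B.

Definition bf_isotropic n (B : 'M[F]_n) : Prop :=
  exists v : 'rV[F]_n, v != 0 /\ v *m B *m v^T = 0.

Definition bf_isometric n (A B : 'M[F]_n) : Prop :=
  exists P : 'M[F]_n, P \in unitmx /\ B = P *m A *m P^T.

Definition bf_similar n (A B : 'M[F]_n) : Prop :=
  exists c : F, c != 0 /\ bf_isometric A (c *: B).

Definition pf1 (a : F) : 'M[F]_2 :=
  diag_mx (\row_(i < 2) (if i == ord0 then 1 else a)).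

Fixpoint pdim (s : seq F) : nat :=
  match s with [::] => 1%N | _ :: s' => (pdim s' * 2)%N end.

Fixpoint pfister (s : seq F) : 'M[F]_(pdim s) :=
  match s return 'M[F]_(pdim s) with
  | [::] => 1%:M
  | a :: s' => pfister s' *t pf1 a
  end.

Definition bf_is_pfister n (B : 'M[F]_n) : Prop :=
  exists s : seq F, all (fun a => a != 0) s /\
    exists e : pdim s = n, bf_isometric (castmx (e, e) (pfister s)) B.

Definition bf_similar_to_pfister n (B : 'M[F]_n) : Prop :=
  exists s : seq F, all (fun a => a != 0) s /\
    exists e : pdim s = n, bf_similar B (castmx (e, e) (pfister s)).

End BilForms.

(* Main.v *)
Require Import Defs.
From HB Require Import structures.
From mathcomp Require Import all_boot all_order all_algebra all_field.
From mathcomp Require Import mxtens.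
From mathcomp Require Import ring zify.
From Stdlib Require Import Classical.
Import Order.TTheory GRing.Theory.
Set Implicit Arguments. Unset Strict Implicit. Unset Printing Implicit Defensive.
Local Open Scope ring_scope.
Section Bil.
Variable R : comRingType.
Definition bl n (A : 'M[R]_n) (x y : 'rV[R]_n) : R := (x *m A *m y^T) 0 0.

Lemma blDl n (A : 'M_n) x1 x2 y : bl A (x1 + x2) y = bl A x1 y + bl A x2 y.
Proof. by rewrite /bl !mulmxDl mxE. Qed.
Lemma blDr n (A : 'M_n) x y1 y2 : bl A x (y1 + y2) = bl A x y1 + bl A x y2.
Proof. by rewrite /bl linearD /= mulmxDr mxE. Qed.
Lemma blZl n (A : 'M_n) a x y : bl A (a *: x) y = a * bl A x y.
Proof. by rewrite /bl -!scalemxAl mxE. Qed.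
Lemma blZr n (A : 'M_n) a x y : bl A x (a *: y) = a * bl A x y.
Proof. by rewrite /bl linearZ /= -scalemxAr mxE. Qed.
Lemma blNl n (A : 'M_n) x y : bl A (- x) y = - bl A x y.
Proof. by rewrite -scaleN1r blZl mulN1r. Qed.
Lemma blNr n (A : 'M_n) x y : bl A x (- y) = - bl A x y.
Proof. by rewrite -scaleN1r blZr mulN1r. Qed.
Lemma bl0l n (A : 'M_n) y : bl A 0 y = 0.
Proof. by rewrite /bl !mul0mx mxE. Qed.
Lemma bl0r n (A : 'M_n) x : bl A x 0 = 0.
Proof. by rewrite /bl trmx0 mulmx0 mxE. Qed.
Lemma blSl n (A : 'M_n) c x y : bl (c *: A) x y = c * bl A x y.
Proof. by rewrite /bl -scalemxAr -scalemxAl mxE. Qed.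
Lemma bl_sym n (A : 'M_n) x y : A^T = A -> bl A x y = bl A y x.
Proof.
move=> sA; rewrite /bl -[in LHS](trmxK (x *m A *m y^T)) mxE.
by rewrite !trmx_mul trmxK sA mulmxA.
Qed.
Lemma bl_iso n (A P : 'M_n) x y : bl (P *m A *m P^T) x y = bl A (x *m P) (y *m P).
Proof. by rewrite /bl trmx_mul !mulmxA. Qed.
Lemma blE n (A : 'M_n) x y : bl A x y = \sum_(j < n) \sum_(i < n) x 0 i * A i j * y 0 j.
Proof.
rewrite /bl mxE; apply: eq_bigr => j _; rewrite !mxE mulr_suml.
by apply: eq_bigr => i _.
Qed.

Definition Met n (A : 'M[R]_n) := forall X, (forall Y, bl A Y Y = 0 -> bl A X Y = 0) -> bl A X X = 0.
End Bil.

Lemma bl_map (aR rR : comRingType) (f : {rmorphism aR -> rR}) n (A : 'M[aR]_n) x y :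
  bl (map_mx f A) (map_mx f x) (map_mx f y) = f (bl A x y).
Proof. by rewrite /bl map_trmx -!map_mxM mxE. Qed.

Section Field.
Variable K : fieldType.
Lemma Met_iso n (A P : 'M[K]_n) : P \in unitmx -> Met A -> Met (P *m A *m P^T).
Proof.
move=> uP MA X HX; rewrite bl_iso; apply: MA => Y HY.
have := HX (Y *m invmx P); rewrite !bl_iso mulmxKV // => H; exact: H.
Qed.
End Field.

Lemma pdim_gt0 (F : fieldType) (s : seq F) : (0 < pdim s)%N.
Proof. by elim: s => //= a s IH; rewrite muln_gt0 IH. Qed.

Lemma mxtens_index_eq m n (i k : 'I_m) (j l : 'I_n) :
  (mxtens_index (i, j) == mxtens_index (k, l)) = (i == k) && (j == l).
Proof. by rewrite (can_eq (@mxtens_indexK m n)) xpair_eqE. Qed.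

Lemma pfister_diag (F : fieldType) (s : seq F) i j :
  pfister s i j = (i == j)%:R * pfister s i i.
Proof.
elim: s i j => [|a s IH] i j /=.
  by rewrite !mxE eqxx mulr1n; case: (i == j); rewrite ?mul1r ?mul0r.
case: (mxtens_indexP i) => i1 i2; case: (mxtens_indexP j) => j1 j2.
rewrite !tensmxE mxtens_index_eq IH /pf1 !mxE eqxx !mulr1n.
by case: (i1 == j1); case: (i2 == j2); rewrite /= ?mulr0 ?mul0r ?mul1r ?mulr1.
Qed.

Lemma pfister_neq0 (F : fieldType) (s : seq F) i :
  all (fun a => a != 0) s -> pfister s i i != 0.
Proof.
elim: s i => [|a s IH] i /=; first by rewrite !mxE eqxx oner_neq0.
case/andP => a0 hs; case: (mxtens_indexP i) => i1 i2.
rewrite tensmxE mulf_neq0 ?IH // /pf1 !mxE eqxx mulr1n.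
by case: (i2 == ord0); rewrite ?oner_neq0.
Qed.


Section Main.
Variable K : fieldType.
Hypothesis two0 : (2%:R : K) = 0.

Lemma c2 (a b d : K) : a = b + 2%:R * d -> a = b.
Proof. by move=> ->; rewrite two0 mul0r addr0. Qed.
Lemma opp2 (a : K) : - a = a.
Proof. by apply: (@c2 _ _ (-a)); ring. Qed.

Lemma qD n (M : 'M[K]_n) x y : M^T = M ->
  bl M (x + y) (x + y) = bl M x x + bl M y y.
Proof. move=> sM; rewrite blDl !blDr (bl_sym y x sM); apply: (@c2 _ _ (bl M x y)); ring. Qed.
Lemma qB n (M : 'M[K]_n) x y : M^T = M ->
  bl M (x - y) (x - y) = bl M x x + bl M y y.
Proof. move=> sM; rewrite blDl !blDr !blNl !blNr (bl_sym y x sM); apply: (@c2 _ _ (- bl M x y)); ring. Qed.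
Lemma qZ n (M : 'M[K]_n) k x : bl M (k *: x) (k *: x) = k ^+ 2 * bl M x x.
Proof. by rewrite blZl blZr mulrA expr2. Qed.

Lemma dual_vec n (M : 'M[K]_n) u : M \in unitmx -> u != 0 -> exists w, bl M u w = 1.
Proof.
move=> uM unz.
have [j hj] : exists j, (u *m M) 0 j != 0.
  apply/existsP; apply: contraR unz; rewrite negb_exists => /forallP H.
  have : u *m M = 0 by apply/rowP => j; rewrite [RHS]mxE; apply/eqP; move: (H j); rewrite negbK.
  by move/(congr1 (mulmx^~ (invmx M))); rewrite mulmxK // mul0mx => ->.
exists (((u *m M) 0 j)^-1 *: delta_mx 0 j); rewrite blZr /bl trmx_delta -colE [col _ _ _ _]mxE.
by rewrite mulVf.
Qed.

Lemma ker2 (M : 'M[K]_4) v w : exists g, g != 0 /\ bl M g v = 0 /\ bl M g w = 0.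
Proof.
set N := M *m (col_mx v w)^T.
have rk : (0 < \rank (kermx N))%N.
  by rewrite mxrank_ker subn_gt0 (leq_ltn_trans (rank_leq_col N)).
have [i hi] : exists i, row i (kermx N) != 0.
  apply/existsP; move: rk; apply: contraLR; rewrite negb_exists => /forallP H.
  have -> : kermx N = 0 by apply/row_matrixP => i; rewrite row0; apply/eqP; move: (H i); rewrite negbK.
  by rewrite mxrank0.
exists (row i (kermx N)); split => //.
have : row i (kermx N) *m N = 0 by rewrite -row_mul mulmx_ker row0.
rewrite /N tr_col_mx mulmxA mul_mx_row => /eqP; rewrite row_mx_eq0 => /andP [/eqP h1 /eqP h2].
by rewrite /bl h1 h2 mxE.
Qed.


Definition m44 (l : seq (seq K)) : 'M[K]_4 := \matrix_(i, j) nth 0 (nth [::] l i) j.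
Definition mx4 (r0 r1 r2 r3 : 'rV[K]_4) : 'M[K]_4 :=
  \matrix_(i, j) (match nat_of_ord i with 0 => r0 | 1 => r1 | 2 => r2 | _ => r3 end) 0 j.

Lemma sum4 (F : 'I_4 -> K) : \sum_(i < 4) F i =
  F (@Ordinal 4 0 isT) + F (@Ordinal 4 1 isT) + F (@Ordinal 4 2 isT) + F (@Ordinal 4 3 isT).
Proof.
rewrite !big_ord_recl big_ord0 addr0 !addrA.
by congr (_ + _ + _ + _); congr F; apply: val_inj.
Qed.

Lemma gram_entry n m (Q : 'M[K]_(m, n)) (M : 'M_n) i j :
  (Q *m M *m Q^T) i j = bl M (row i Q) (row j Q).
Proof.
rewrite /bl !mxE; apply: eq_bigr => k _; rewrite !mxE; congr (_ * _).
by apply: eq_bigr => l _; rewrite !mxE.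
Qed.

Lemma unit_of_gram n (P A : 'M[K]_n) : P *m A *m P^T \in unitmx -> P \in unitmx.
Proof. by rewrite !unitmx_mul => /andP [/andP [] ]. Qed.

Lemma pfister_unit (s : seq K) : all (fun a => a != 0) s -> pfister s \in unitmx.
Proof.
move=> hs; have -> : pfister s = diag_mx (\row_i pfister s i i).
  by apply/matrixP => i j; rewrite pfister_diag !mxE mulr_natl.
rewrite unitmxE det_diag unitfE; apply/prodf_neq0 => i _; rewrite mxE.
exact: pfister_neq0.
Qed.

Lemma pf4 (w : K) (i : 'I_4) : pfister [:: 1; w] i i = nth 0 [:: 1; 1; w; w] i.
Proof.
have E : forall (i : 'I_2) (j : 'I_2) k (h : (k < 4)%N), (i * 2 + j)%N = k ->
   @Ordinal 4 k h = mxtens_index (i, j) by move=> i' j k h e; apply: val_inj.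
case: i => [[|[|[|[|i]]]] Hi] //.
- rewrite (E (@Ordinal 2 0 isT) (@Ordinal 2 0 isT)) //.
  by rewrite /= !tensmxE /pf1 !mxE /= !mulr1n !mul1r ?mulr1.
- rewrite (E (@Ordinal 2 0 isT) (@Ordinal 2 1 isT)) //.
  by rewrite /= !tensmxE /pf1 !mxE /= !mulr1n !mul1r ?mulr1.
- rewrite (E (@Ordinal 2 1 isT) (@Ordinal 2 0 isT)) //.
  by rewrite /= !tensmxE /pf1 !mxE /= !mulr1n !mul1r ?mulr1.
- rewrite (E (@Ordinal 2 1 isT) (@Ordinal 2 1 isT)) //.
  by rewrite /= !tensmxE /pf1 !mxE /= !mulr1n !mul1r ?mulr1.
Qed.

Lemma pf44 (w' : K) : pfister [:: 1; w'] = m44 [:: [:: 1;0;0;0]; [::0;1;0;0]; [::0;0;w';0]; [::0;0;0;w']].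
Proof.
apply/matrixP => i j; rewrite pfister_diag [RHS]mxE pf4.
by case: i => [[|[|[|[|i]]]] Hi] //; case: j => [[|[|[|[|j]]]] Hj] //=; rewrite ?mul0r ?mul1r.
Qed.

Ltac c2r a c := first [ring | apply: (@c2 _ _ (-c)); ring | apply: (@c2 _ _ (-a)); ring].
Ltac c2f a c a0 := first [ring | apply: (@c2 _ _ (-c)); ring | apply: (@c2 _ _ (-a)); ring | field; exact: a0 | apply: (@c2 _ _ (-c)); field; exact: a0 | apply: (@c2 _ _ (-a)); field; exact: a0].

Lemma final_step (a c : K) : a != 0 \/ c != 0 ->
  exists lam w' T, [/\ lam != 0, w' != 0 &
   T *m m44 [:: [:: 0;1;0;0]; [::1;a;0;0]; [::0;0;0;1]; [::0;0;1;c]] *m T^T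
     = lam *: pfister [:: 1; w']].
Proof.
pose pf := pf44.
have gramT : forall (T : 'M_4) lam w', (forall i j, (T *m m44 [:: [:: 0;1;0;0]; [::1;a;0;0]; [::0;0;0;1]; [::0;0;1;c]] *m T^T) i j
        = (lam *: pfister [:: 1; w']) i j) -> T *m m44 [:: [:: 0;1;0;0]; [::1;a;0;0]; [::0;0;0;1]; [::0;0;1;c]] *m T^T
     = lam *: pfister [:: 1; w'] by move=> T lam w' H; apply/matrixP.
have [a0|a0] := eqVneq a 0; have [c0|c0] := eqVneq c 0.
- by case => /negP; rewrite ?a0 ?c0 ?eqxx.
-
  move=> _; exists c, 1, (m44 [:: [:: 0;1;0;1]; [:: -c;1;0;1]; [:: -c;0;0;1]; [:: 0;0;-c;1]]).
  split => //; first exact: oner_neq0.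
  apply: gramT => i j; rewrite pf a0.
  case: i => [[|[|[|[|i]]]] Hi] //; case: j => [[|[|[|[|j]]]] Hj] //.
  all: rewrite ?mxE ?sum4 /= ?mxE /= ?sum4 /= ?mxE /=.
  all: try c2r a c.
-
  move=> _; exists a, 1, (m44 [:: [:: 0;1;0;1]; [:: 0;1;-a;1]; [:: 0;1;-a;0]; [:: -a;1;0;0]]).
  split => //; first exact: oner_neq0.
  apply: gramT => i j; rewrite pf c0.
  case: i => [[|[|[|[|i]]]] Hi] //; case: j => [[|[|[|[|j]]]] Hj] //.
  all: rewrite ?mxE ?sum4 /= ?mxE /= ?sum4 /= ?mxE /=.
  all: try c2r a c.
- move=> _; exists a, (c / a), (m44 [:: [:: 0;1;0;0]; [:: -a;1;0;0]; [:: 0;0;0;1]; [:: 0;0;-c;1]]).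
  split => //; first by rewrite mulf_neq0 ?invr_neq0.
  apply: gramT => i j; rewrite pf.
  case: i => [[|[|[|[|i]]]] Hi] //; case: j => [[|[|[|[|j]]]] Hj] //.
  all: rewrite ?mxE ?sum4 /= ?mxE /= ?sum4 /= ?mxE /=.
  all: try c2f a c a0.
Qed.

End Main.


Section Main2.
Variable K : fieldType.
Hypothesis two0 : (2%:R : K) = 0.
Local Notation c2 := (c2 two0).
Local Notation qB := (qB two0).
Local Notation final_step := (final_step two0).

Lemma row_mx4 (r0 r1 r2 r3 : 'rV[K]_4) (i : 'I_4) : row i (mx4 r0 r1 r2 r3) = nth 0 [:: r0; r1; r2; r3] i.
Proof. by apply/rowP => j; rewrite !mxE; case: i => [[|[|[|[|i]]]] Hi]. Qed.

Lemma main_K (M : 'M[K]_4) (v : 'rV_4) :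
  M^T = M -> M \in unitmx -> Met M -> (exists x, bl M x x != 0) -> v != 0 -> bl M v v = 0 ->
  exists lam w' P, [/\ lam != 0, w' != 0, P \in unitmx & P *m M *m P^T = lam *: pfister [:: 1; w']].
Proof.
move=> sM uM MetM [x0 hx0] vnz vq.
have [w vw] := dual_vec uM vnz.
have wv : bl M w v = 1 by rewrite bl_sym.
set a := bl M w w.
pose pi y := y - (bl M y w - a * bl M y v) *: v - (bl M y v) *: w.
have piv : forall y, bl M (pi y) v = 0.
  by move=> y; rewrite /pi !blDl !blNl !blZl vq wv; ring.
have piw : forall y, bl M (pi y) w = 0.
  by move=> y; rewrite /pi !blDl !blNl !blZl vw -/a; ring.
have [g1 [g1nz [g1v [g1w g1q]]]] : exists g1, [/\ g1 != 0, bl M g1 v = 0, bl M g1 w = 0 & bl M g1 g1 = 0].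
  case: (classic (exists g1, [/\ g1 != 0, bl M g1 v = 0, bl M g1 w = 0 & bl M g1 g1 = 0])) => // Hno; exfalso.
  have aniso : forall g, bl M g v = 0 -> bl M g w = 0 -> bl M g g = 0 -> g = 0.
    move=> g h1 h2 h3; apply/eqP; apply: contraT => gnz; by case: Hno; exists g; split.
  have Zsub : forall y, bl M y y = 0 -> bl M y v = 0 -> y = bl M y w *: v.
    move=> y yq yv; apply/eqP; rewrite -subr_eq0; apply/eqP; apply: aniso.
    - by rewrite blDl blNl blZl yv vq; ring.
    - by rewrite blDl blNl blZl vw; ring.
    - by rewrite qB // qZ yq vq; ring.
  have [g0 [g0nz [g0v g0w]]] := ker2 M v w.
  have g0q : bl M g0 g0 != 0.
    by apply: contra g0nz => /eqP h; apply/eqP; apply: aniso.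
  case: (classic (exists k, bl M k k = 0 /\ bl M k v = 1)) => [[k [kq kv]] | nok].
  - pose X := g0 - (bl M g0 k) *: v.
    have XX : bl M X X = bl M g0 g0 by rewrite qB // qZ vq mulr0 addr0.
    have Xv : bl M X v = 0 by rewrite /X blDl blNl blZl vq g0v; ring.
    have Xk : bl M X k = 0 by rewrite /X blDl blNl blZl (bl_sym v k sM) kv; ring.
    move/eqP: g0q; apply; rewrite -XX; apply: MetM => Y YQ.
    pose y' := Y - (bl M Y v) *: k.
    have y'q : bl M y' y' = 0 by rewrite qB // qZ kq YQ; ring.
    have y'v : bl M y' v = 0 by rewrite blDl blNl blZl kv; ring.
    have Ye : Y = (bl M Y v) *: k + (bl M y' w) *: v.
      by rewrite -(Zsub y' y'q y'v) /y' addrC subrK.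
    by rewrite Ye blDr !blZr Xv Xk; ring.
  - have Zv : forall Y, bl M Y Y = 0 -> bl M Y v = 0.
      move=> Y YQ; apply/eqP; apply: contraT => hb; case: nok.
      exists ((bl M Y v)^-1 *: Y); split; first by rewrite qZ YQ mulr0.
      by rewrite blZl mulVf.
    apply: (negP g0q); apply/eqP; apply: MetM => Y YQ.
    by rewrite (Zsub Y YQ (Zv Y YQ)) blZr g0v mulr0.
have [h g1h] := dual_vec uM g1nz.
pose g2 := pi h.
have g12 : bl M g1 g2 = 1 by rewrite /g2 /pi !blDr !blNr !blZr g1h g1v g1w; ring.
set c := bl M g2 g2.
pose Q0 := mx4 v w g1 g2.
have G : Q0 *m M *m Q0^T = m44 [:: [:: 0;1;0;0]; [::1;a;0;0]; [::0;0;0;1]; [::0;0;1;c]].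
  apply/matrixP => i j; rewrite gram_entry !row_mx4 [RHS]mxE.
  have e1 := bl_sym v g1 sM; have e2 := bl_sym v g2 sM; have e3 := bl_sym w g1 sM.
  have e4 := bl_sym w g2 sM; have e5 := bl_sym g2 g1 sM.
  case: i => [[|[|[|[|i]]]] Hi] //; case: j => [[|[|[|[|j]]]] Hj] //=.
  all: rewrite ?e1 ?e2 ?e3 ?e4 ?e5 ?vq ?vw ?wv ?g1v ?g1w ?g1q ?g12 ?piv ?piw //.
have [a0|a0] := eqVneq a 0; have [c0|c0] := eqVneq c 0.
- exfalso; move: G; rewrite a0 c0 => G.
  set G0 := m44 _ in G.
  have uG : G0 \in unitmx.
    have : G0 *m G0 = 1%:M.
      apply/matrixP => i j; rewrite !mxE sum4.
      by case: i => [[|[|[|[|i]]]] Hi] //; case: j => [[|[|[|[|j]]]] Hj] //=; rewrite !mxE /=; ring.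
    by case/mulmx1_unit.
  have uQ : Q0 \in unitmx by apply: (unit_of_gram (A:=M)); rewrite G.
  move/eqP: hx0; apply.
  rewrite -[x0](mulmxKV uQ) -bl_iso G; move: (x0 *m invmx Q0) => y.
  rewrite blE !sum4 /= !mxE /=.
  apply: (@c2 _ _ (y 0 (@Ordinal 4 0 isT) * y 0 (@Ordinal 4 1 isT)
     + y 0 (@Ordinal 4 2 isT) * y 0 (@Ordinal 4 3 isT))).
  ring.
all: have aoc : a != 0 \/ c != 0 by first [by left | by right].
all: have [lam [w' [T [l0 w0 HT]]]] := final_step aoc.
all: have E : T *m Q0 *m M *m (T *m Q0)^T = lam *: pfister [:: 1; w']
  by rewrite -HT -G trmx_mul !mulmxA.
all: exists lam, w', (T *m Q0); split => //.
all: apply: (unit_of_gram (A:=M)); rewrite E unitmxZ ?unitfE //.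
all: have hs : all (fun a => a != 0) [:: 1; w'] by rewrite /= oner_neq0 w0.
all: exact: (pfister_unit hs).
Qed.

End Main2.


Section P8.
Variable K : fieldType.
Hypothesis two0 : (2%:R : K) = 0.
Local Notation c2 := (c2 two0).

Lemma sum8 (F : 'I_8 -> K) : \sum_(i < 8) F i =
  F (@Ordinal 8 0 isT) + F (@Ordinal 8 1 isT) + F (@Ordinal 8 2 isT) + F (@Ordinal 8 3 isT) +
  F (@Ordinal 8 4 isT) + F (@Ordinal 8 5 isT) + F (@Ordinal 8 6 isT) + F (@Ordinal 8 7 isT).
Proof.
rewrite !big_ord_recl big_ord0 addr0 !addrA.
by congr (_ + _ + _ + _ + _ + _ + _ + _); congr F; apply: val_inj.
Qed.

Lemma bl_diag n (d u w : 'rV[K]_n) : bl (diag_mx d) u w = \sum_i u 0 i * d 0 i * w 0 i.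
Proof. by rewrite /bl mul_mx_diag mxE; apply: eq_bigr => i _; rewrite !mxE. Qed.

Definition Q8 (x y z a0 a1 a2 a3 a4 a5 a6 a7 b0 b1 b2 b3 b4 b5 b6 b7 : K) : K := a0 * b0 + a1 * b1 * x + a2 * b2 * y + a3 * b3 * x * y + a4 * b4 * z + a5 * b5 * x * z + a6 * b6 * y * z + a7 * b7 * x * y * z.

Definition m8_0 (x y z a0 a1 a2 a3 a4 a5 a6 a7 b0 b1 b2 b3 b4 b5 b6 b7 : K) : K := a0 * b0 + a1 * b1 * x + a2 * b2 * y + a3 * b3 * x * y + a4 * b4 * z + a5 * b5 * x * z + a6 * b6 * y * z + a7 * b7 * x * y * z.

Definition m8_1 (x y z a0 a1 a2 a3 a4 a5 a6 a7 b0 b1 b2 b3 b4 b5 b6 b7 : K) : K := a0 * b1 + a1 * b0 + a2 * b3 * y + a3 * b2 * y + a4 * b5 * z + a5 * b4 * z + a6 * b7 * y * z + a7 * b6 * y * z.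

Definition m8_2 (x y z a0 a1 a2 a3 a4 a5 a6 a7 b0 b1 b2 b3 b4 b5 b6 b7 : K) : K := a0 * b2 + a1 * b3 * x + a2 * b0 + a3 * b1 * x + a4 * b6 * z + a5 * b7 * x * z + a6 * b4 * z + a7 * b5 * x * z.

Definition m8_3 (x y z a0 a1 a2 a3 a4 a5 a6 a7 b0 b1 b2 b3 b4 b5 b6 b7 : K) : K := a0 * b3 + a1 * b2 + a2 * b1 + a3 * b0 + a4 * b7 * z + a5 * b6 * z + a6 * b5 * z + a7 * b4 * z.

Definition m8_4 (x y z a0 a1 a2 a3 a4 a5 a6 a7 b0 b1 b2 b3 b4 b5 b6 b7 : K) : K := a0 * b4 + a1 * b5 * x + a2 * b6 * y + a3 * b7 * x * y + a4 * b0 + a5 * b1 * x + a6 * b2 * y + a7 * b3 * x * y.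

Definition m8_5 (x y z a0 a1 a2 a3 a4 a5 a6 a7 b0 b1 b2 b3 b4 b5 b6 b7 : K) : K := a0 * b5 + a1 * b4 + a2 * b7 * y + a3 * b6 * y + a4 * b1 + a5 * b0 + a6 * b3 * y + a7 * b2 * y.

Definition m8_6 (x y z a0 a1 a2 a3 a4 a5 a6 a7 b0 b1 b2 b3 b4 b5 b6 b7 : K) : K := a0 * b6 + a1 * b7 * x + a2 * b4 + a3 * b5 * x + a4 * b2 + a5 * b3 * x + a6 * b0 + a7 * b1 * x.

Definition m8_7 (x y z a0 a1 a2 a3 a4 a5 a6 a7 b0 b1 b2 b3 b4 b5 b6 b7 : K) : K := a0 * b7 + a1 * b6 + a2 * b5 + a3 * b4 + a4 * b3 + a5 * b2 + a6 * b1 + a7 * b0.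

Lemma idA_s (x y z a0 a1 a2 a3 a4 a5 a6 a7 X0 X1 X2 X3 X4 X5 X6 X7 h0 h1 h2 h3 h4 h5 h6 h7 : K) :
  (Q8 x y z a0 a1 a2 a3 a4 a5 a6 a7 (m8_0 x y z X0 X1 X2 X3 X4 X5 X6 X7 (m8_0 x y z X0 X1 X2 X3 X4 X5 X6 X7 h0 h1 h2 h3 h4 h5 h6 h7) (m8_1 x y z X0 X1 X2 X3 X4 X5 X6 X7 h0 h1 h2 h3 h4 h5 h6 h7) (m8_2 x y z X0 X1 X2 X3 X4 X5 X6 X7 h0 h1 h2 h3 h4 h5 h6 h7) (m8_3 x y z X0 X1 X2 X3 X4 X5 X6 X7 h0 h1 h2 h3 h4 h5 h6 h7) (m8_4 x y z X0 X1 X2 X3 X4 X5 X6 X7 h0 h1 h2 h3 h4 h5 h6 h7) (m8_5 x y z X0 X1 X2 X3 X4 X5 X6 X7 h0 h1 h2 h3 h4 h5 h6 h7) (m8_6 x y z X0 X1 X2 X3 X4 X5 X6 X7 h0 h1 h2 h3 h4 h5 h6 h7) (m8_7 x y z X0 X1 X2 X3 X4 X5 X6 X7 h0 h1 h2 h3 h4 h5 h6 h7)) (m8_1 x y z X0 X1 X2 X3 X4 X5 X6 X7 (m8_0 x y z X0 X1 X2 X3 X4 X5 X6 X7 h0 h1 h2 h3 h4 h5 h6 h7) (m8_1 x y z X0 X1 X2 X3 X4 X5 X6 X7 h0 h1 h2 h3 h4 h5 h6 h7) (m8_2 x y z X0 X1 X2 X3 X4 X5 X6 X7 h0 h1 h2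 h3 h4 h5 h6 h7) (m8_3 x y z X0 X1 X2 X3 X4 X5 X6 X7 h0 h1 h2 h3 h4 h5 h6 h7) (m8_4 x y z X0 X1 X2 X3 X4 X5 X6 X7 h0 h1 h2 h3 h4 h5 h6 h7) (m8_5 x y z X0 X1 X2 X3 X4 X5 X6 X7 h0 h1 h2 h3 h4 h5 h6 h7) (m8_6 x y z X0 X1 X2 X3 X4 X5 X6 X7 h0 h1 h2 h3 h4 h5 h6 h7) (m8_7 x y z X0 X1 X2 X3 X4 X5 X6 X7 h0 h1 h2 h3 h4 h5 h6 h7)) (m8_2 x y z X0 X1 X2 X3 X4 X5 X6 X7 (m8_0 x y z X0 X1 X2 X3 X4 X5 X6 X7 h0 h1 h2 h3 h4 h5 h6 h7) (m8_1 x y z X0 X1 X2 X3 X4 X5 X6 X7 h0 h1 h2 h3 h4 h5 h6 h7) (m8_2 x y z X0 X1 X2 X3 X4 X5 X6 X7 h0 h1 h2 h3 h4 h5 h6 h7) (m8_3 x y z X0 X1 X2 X3 X4 X5 X6 X7 h0 h1 h2 h3 h4 h5 h6 h7) (m8_4 x y z X0 X1 X2 X3 X4 X5 X6 X7 h0 h1 h2 h3 h4 h5 h6 h7) (m8_5 x y z X0 X1 X2 X3 X4 X5 X6 X7 h0 h1 h2 h3 h4 h5 h6 h7) (m8_6 x y z X0 X1 X2 X3 X4 X5 X6 X7 h0 h1 h2 h3 h4 h5 h6 h7) (m8_7 x y z X0 X1 X2 X3 X4 X5 X6 X7 h0 h1 h2 h3 h4 h5 h6 h7)) (m8_3 x y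 z X0 X1 X2 X3 X4 X5 X6 X7 (m8_0 x y z X0 X1 X2 X3 X4 X5 X6 X7 h0 h1 h2 h3 h4 h5 h6 h7) (m8_1 x y z X0 X1 X2 X3 X4 X5 X6 X7 h0 h1 h2 h3 h4 h5 h6 h7) (m8_2 x y z X0 X1 X2 X3 X4 X5 X6 X7 h0 h1 h2 h3 h4 h5 h6 h7) (m8_3 x y z X0 X1 X2 X3 X4 X5 X6 X7 h0 h1 h2 h3 h4 h5 h6 h7) (m8_4 x y z X0 X1 X2 X3 X4 X5 X6 X7 h0 h1 h2 h3 h4 h5 h6 h7) (m8_5 x y z X0 X1 X2 X3 X4 X5 X6 X7 h0 h1 h2 h3 h4 h5 h6 h7) (m8_6 x y z X0 X1 X2 X3 X4 X5 X6 X7 h0 h1 h2 h3 h4 h5 h6 h7) (m8_7 x y z X0 X1 X2 X3 X4 X5 X6 X7 h0 h1 h2 h3 h4 h5 h6 h7)) (m8_4 x y z X0 X1 X2 X3 X4 X5 X6 X7 (m8_0 x y z X0 X1 X2 X3 X4 X5 X6 X7 h0 h1 h2 h3 h4 h5 h6 h7) (m8_1 x y z X0 X1 X2 X3 X4 X5 X6 X7 h0 h1 h2 h3 h4 h5 h6 h7) (m8_2 x y z X0 X1 X2 X3 X4 X5 X6 X7 h0 h1 h2 h3 h4 h5 h6 h7) (m8_3 x y z X0 X1 X2 X3 X4 X5 X6 X7 h0 h1 h2 h3 h4 h5 h6 h7) (m8_4 x y z X0 X1 X2 X3 X4 X5 X6 X7 h0 h1 h2 h3 h4 h5 h6 h7)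 (m8_5 x y z X0 X1 X2 X3 X4 X5 X6 X7 h0 h1 h2 h3 h4 h5 h6 h7) (m8_6 x y z X0 X1 X2 X3 X4 X5 X6 X7 h0 h1 h2 h3 h4 h5 h6 h7) (m8_7 x y z X0 X1 X2 X3 X4 X5 X6 X7 h0 h1 h2 h3 h4 h5 h6 h7)) (m8_5 x y z X0 X1 X2 X3 X4 X5 X6 X7 (m8_0 x y z X0 X1 X2 X3 X4 X5 X6 X7 h0 h1 h2 h3 h4 h5 h6 h7) (m8_1 x y z X0 X1 X2 X3 X4 X5 X6 X7 h0 h1 h2 h3 h4 h5 h6 h7) (m8_2 x y z X0 X1 X2 X3 X4 X5 X6 X7 h0 h1 h2 h3 h4 h5 h6 h7) (m8_3 x y z X0 X1 X2 X3 X4 X5 X6 X7 h0 h1 h2 h3 h4 h5 h6 h7) (m8_4 x y z X0 X1 X2 X3 X4 X5 X6 X7 h0 h1 h2 h3 h4 h5 h6 h7) (m8_5 x y z X0 X1 X2 X3 X4 X5 X6 X7 h0 h1 h2 h3 h4 h5 h6 h7) (m8_6 x y z X0 X1 X2 X3 X4 X5 X6 X7 h0 h1 h2 h3 h4 h5 h6 h7) (m8_7 x y z X0 X1 X2 X3 X4 X5 X6 X7 h0 h1 h2 h3 h4 h5 h6 h7)) (m8_6 x y z X0 X1 X2 X3 X4 X5 X6 X7 (m8_0 x y z X0 X1 X2 X3 X4 X5 X6 X7 h0 h1 h2 h3 h4 h5 h6 h7) (m8_1 x y z X0 X1 X2 X3 X4 X5 X6 X7 h0 h1 h2 h3 h4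 h5 h6 h7) (m8_2 x y z X0 X1 X2 X3 X4 X5 X6 X7 h0 h1 h2 h3 h4 h5 h6 h7) (m8_3 x y z X0 X1 X2 X3 X4 X5 X6 X7 h0 h1 h2 h3 h4 h5 h6 h7) (m8_4 x y z X0 X1 X2 X3 X4 X5 X6 X7 h0 h1 h2 h3 h4 h5 h6 h7) (m8_5 x y z X0 X1 X2 X3 X4 X5 X6 X7 h0 h1 h2 h3 h4 h5 h6 h7) (m8_6 x y z X0 X1 X2 X3 X4 X5 X6 X7 h0 h1 h2 h3 h4 h5 h6 h7) (m8_7 x y z X0 X1 X2 X3 X4 X5 X6 X7 h0 h1 h2 h3 h4 h5 h6 h7)) (m8_7 x y z X0 X1 X2 X3 X4 X5 X6 X7 (m8_0 x y z X0 X1 X2 X3 X4 X5 X6 X7 h0 h1 h2 h3 h4 h5 h6 h7) (m8_1 x y z X0 X1 X2 X3 X4 X5 X6 X7 h0 h1 h2 h3 h4 h5 h6 h7) (m8_2 x y z X0 X1 X2 X3 X4 X5 X6 X7 h0 h1 h2 h3 h4 h5 h6 h7) (m8_3 x y z X0 X1 X2 X3 X4 X5 X6 X7 h0 h1 h2 h3 h4 h5 h6 h7) (m8_4 x y z X0 X1 X2 X3 X4 X5 X6 X7 h0 h1 h2 h3 h4 h5 h6 h7) (m8_5 x y z X0 X1 X2 X3 X4 X5 X6 X7 h0 h1 h2 h3 h4 h5 h6 h7) (m8_6 x y z X0 X1 X2 X3 X4 X5 X6 X7 h0 h1 h2 h3 h4 h5 h6 h7) (m8_7 x y z X0 X1 X2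 X3 X4 X5 X6 X7 h0 h1 h2 h3 h4 h5 h6 h7))) = (Q8 x y z X0 X1 X2 X3 X4 X5 X6 X7 X0 X1 X2 X3 X4 X5 X6 X7) * (Q8 x y z a0 a1 a2 a3 a4 a5 a6 a7 h0 h1 h2 h3 h4 h5 h6 h7).
Proof.
rewrite /Q8 /m8_0 /m8_1 /m8_2 /m8_3 /m8_4 /m8_5 /m8_6 /m8_7.
apply: (@c2 _ _ (X0 * X1 * a0 * h1 * x + X0 * X1 * a1 * h0 * x + X0 * X1 * a2 * h3 * x * y + X0 * X1 * a3 * h2 * x * y + X0 * X1 * a4 * h5 * x * z + X0 * X1 * a5 * h4 * x * z + X0 * X1 * a6 * h7 * x * y * z + X0 * X1 * a7 * h6 * x * y * z + X0 * X2 * a0 * h2 * y + X0 * X2 * a1 * h3 * x * y + X0 * X2 * a2 * h0 * y + X0 * X2 * a3 * h1 * x * y + X0 * X2 * a4 * h6 * y * z + X0 * X2 * a5 * h7 * x * y * z + X0 * X2 * a6 * h4 * y * z + X0 * X2 * a7 * h5 * x * y * z + X0 * X3 * a0 * h3 * x * y + X0 * X3 * a1 * h2 * x * y + X0 * X3 * a2 * h1 * x * y + X0 * X3 * a3 * h0 * x * y + X0 * X3 * a4 * h7 * x * y * z + X0 * X3 * a5 * h6 * x * y * z + X0 * X3 * a6 * h5 * x * y * z + X0 * X3 * a7 * h4 * x * y * z + X0 * X4 * a0 * h4 * z + X0 * X4 * a1 * h5 * x * z + X0 * X4 * a2 * h6 * y * z + X0 * X4 * a3 * h7 * x * y * z +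 X0 * X4 * a4 * h0 * z + X0 * X4 * a5 * h1 * x * z + X0 * X4 * a6 * h2 * y * z + X0 * X4 * a7 * h3 * x * y * z + X0 * X5 * a0 * h5 * x * z + X0 * X5 * a1 * h4 * x * z + X0 * X5 * a2 * h7 * x * y * z + X0 * X5 * a3 * h6 * x * y * z + X0 * X5 * a4 * h1 * x * z + X0 * X5 * a5 * h0 * x * z + X0 * X5 * a6 * h3 * x * y * z + X0 * X5 * a7 * h2 * x * y * z + X0 * X6 * a0 * h6 * y * z + X0 * X6 * a1 * h7 * x * y * z + X0 * X6 * a2 * h4 * y * z + X0 * X6 * a3 * h5 * x * y * z + X0 * X6 * a4 * h2 * y * z + X0 * X6 * a5 * h3 * x * y * z + X0 * X6 * a6 * h0 * y * z + X0 * X6 * a7 * h1 * x * y * z + X0 * X7 * a0 * h7 * x * y * z + X0 * X7 * a1 * h6 * x * y * z + X0 * X7 * a2 * h5 * x * y * z + X0 * X7 * a3 * h4 * x * y * z + X0 * X7 * a4 * h3 * x * y * z + X0 * X7 * a5 * h2 * x * y * z + X0 * X7 * a6 * h1 * x * y * z + X0 * X7 * a7 * h0 * x * y * z + X1 * X2 * a0 * h3 * x * y + X1 * X2 * a1 * h2 * x * y + X1 * X2 * a2 * h1 * x * y + X1 * X2 * a3 * h0 * x * y + X1 * X2 * a4 * h7 * x * y * z + X1 * X2 * a5 * h6 * x * y * z + X1 * X2 * a6 * h5 * x * y * z + X1 * X2 * a7 * h4 * x * y * z + X1 * X3 * a0 * h2 * x * y + X1 * X3 * a1 * h3 * x * x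 * y + X1 * X3 * a2 * h0 * x * y + X1 * X3 * a3 * h1 * x * x * y + X1 * X3 * a4 * h6 * x * y * z + X1 * X3 * a5 * h7 * x * x * y * z + X1 * X3 * a6 * h4 * x * y * z + X1 * X3 * a7 * h5 * x * x * y * z + X1 * X4 * a0 * h5 * x * z + X1 * X4 * a1 * h4 * x * z + X1 * X4 * a2 * h7 * x * y * z + X1 * X4 * a3 * h6 * x * y * z + X1 * X4 * a4 * h1 * x * z + X1 * X4 * a5 * h0 * x * z + X1 * X4 * a6 * h3 * x * y * z + X1 * X4 * a7 * h2 * x * y * z + X1 * X5 * a0 * h4 * x * z + X1 * X5 * a1 * h5 * x * x * z + X1 * X5 * a2 * h6 * x * y * z + X1 * X5 * a3 * h7 * x * x * y * z + X1 * X5 * a4 * h0 * x * z + X1 * X5 * a5 * h1 * x * x * z + X1 * X5 * a6 * h2 * x * y * z + X1 * X5 * a7 * h3 * x * x * y * z + X1 * X6 * a0 * h7 * x * y * z + X1 * X6 * a1 * h6 * x * y * z + X1 * X6 * a2 * h5 * x * y * z + X1 * X6 * a3 * h4 * x * y * z + X1 * X6 * a4 * h3 * x * y * z + X1 * X6 * a5 * h2 * x * y * z + X1 * X6 * a6 * h1 * x * y * z + X1 * X6 * a7 * h0 * x * y * z + X1 * X7 * a0 * h6 * x * y * z + X1 * X7 * a1 * h7 * x * x * y * z + X1 * X7 * a2 * h4 * x * y * z + X1 * X7 * a3 * h5 * x * x * y * z + X1 * X7 * a4 * h2 * x * y * z + X1 * X7 * a5 * h3 * x * x * y * z + X1 *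 X7 * a6 * h0 * x * y * z + X1 * X7 * a7 * h1 * x * x * y * z + X2 * X3 * a0 * h1 * x * y + X2 * X3 * a1 * h0 * x * y + X2 * X3 * a2 * h3 * x * y * y + X2 * X3 * a3 * h2 * x * y * y + X2 * X3 * a4 * h5 * x * y * z + X2 * X3 * a5 * h4 * x * y * z + X2 * X3 * a6 * h7 * x * y * y * z + X2 * X3 * a7 * h6 * x * y * y * z + X2 * X4 * a0 * h6 * y * z + X2 * X4 * a1 * h7 * x * y * z + X2 * X4 * a2 * h4 * y * z + X2 * X4 * a3 * h5 * x * y * z + X2 * X4 * a4 * h2 * y * z + X2 * X4 * a5 * h3 * x * y * z + X2 * X4 * a6 * h0 * y * z + X2 * X4 * a7 * h1 * x * y * z + X2 * X5 * a0 * h7 * x * y * z + X2 * X5 * a1 * h6 * x * y * z + X2 * X5 * a2 * h5 * x * y * z + X2 * X5 * a3 * h4 * x * y * z + X2 * X5 * a4 * h3 * x * y * z + X2 * X5 * a5 * h2 * x * y * z + X2 * X5 * a6 * h1 * x * y * z + X2 * X5 * a7 * h0 * x * y * z + X2 * X6 * a0 * h4 * y * z + X2 * X6 * a1 * h5 * x * y * z + X2 * X6 * a2 * h6 * y * y * z + X2 * X6 * a3 * h7 * x * y * y * z + X2 * X6 * a4 * h0 * y * z + X2 * X6 * a5 * h1 * x * y * z + X2 * X6 * a6 * h2 * y * y * z + X2 * X6 * a7 * h3 * x * y * y * z + X2 * X7 * a0 * h5 * x * y * z + X2 * X7 * a1 * h4 * x * y * z + X2 * X7 * a2 * h7 * x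 * y * y * z + X2 * X7 * a3 * h6 * x * y * y * z + X2 * X7 * a4 * h1 * x * y * z + X2 * X7 * a5 * h0 * x * y * z + X2 * X7 * a6 * h3 * x * y * y * z + X2 * X7 * a7 * h2 * x * y * y * z + X3 * X4 * a0 * h7 * x * y * z + X3 * X4 * a1 * h6 * x * y * z + X3 * X4 * a2 * h5 * x * y * z + X3 * X4 * a3 * h4 * x * y * z + X3 * X4 * a4 * h3 * x * y * z + X3 * X4 * a5 * h2 * x * y * z + X3 * X4 * a6 * h1 * x * y * z + X3 * X4 * a7 * h0 * x * y * z + X3 * X5 * a0 * h6 * x * y * z + X3 * X5 * a1 * h7 * x * x * y * z + X3 * X5 * a2 * h4 * x * y * z + X3 * X5 * a3 * h5 * x * x * y * z + X3 * X5 * a4 * h2 * x * y * z + X3 * X5 * a5 * h3 * x * x * y * z + X3 * X5 * a6 * h0 * x * y * z + X3 * X5 * a7 * h1 * x * x * y * z + X3 * X6 * a0 * h5 * x * y * z + X3 * X6 * a1 * h4 * x * y * z + X3 * X6 * a2 * h7 * x * y * y * z + X3 * X6 * a3 * h6 * x * y * y * z + X3 * X6 * a4 * h1 * x * y * z + X3 * X6 * a5 * h0 * x * y * z + X3 * X6 * a6 * h3 * x * y * y * z + X3 * X6 * a7 * h2 * x * y * y * z + X3 * X7 * a0 * h4 * x * y * z + X3 * X7 * a1 * h5 * x * x * y * z + X3 * X7 * a2 * h6 * x * y * y * z + X3 * X7 * a3 * h7 * x * x * y * y * z + X3 * X7 * a4 * h0 * x * y * z + X3 * X7 * a5 * h1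 * x * x * y * z + X3 * X7 * a6 * h2 * x * y * y * z + X3 * X7 * a7 * h3 * x * x * y * y * z + X4 * X5 * a0 * h1 * x * z + X4 * X5 * a1 * h0 * x * z + X4 * X5 * a2 * h3 * x * y * z + X4 * X5 * a3 * h2 * x * y * z + X4 * X5 * a4 * h5 * x * z * z + X4 * X5 * a5 * h4 * x * z * z + X4 * X5 * a6 * h7 * x * y * z * z + X4 * X5 * a7 * h6 * x * y * z * z + X4 * X6 * a0 * h2 * y * z + X4 * X6 * a1 * h3 * x * y * z + X4 * X6 * a2 * h0 * y * z + X4 * X6 * a3 * h1 * x * y * z + X4 * X6 * a4 * h6 * y * z * z + X4 * X6 * a5 * h7 * x * y * z * z + X4 * X6 * a6 * h4 * y * z * z + X4 * X6 * a7 * h5 * x * y * z * z + X4 * X7 * a0 * h3 * x * y * z + X4 * X7 * a1 * h2 * x * y * z + X4 * X7 * a2 * h1 * x * y * z + X4 * X7 * a3 * h0 * x * y * z + X4 * X7 * a4 * h7 * x * y * z * z + X4 * X7 * a5 * h6 * x * y * z * z + X4 * X7 * a6 * h5 * x * y * z * z + X4 * X7 * a7 * h4 * x * y * z * z + X5 * X6 * a0 * h3 * x * y * z + X5 * X6 * a1 * h2 * x * y * z + X5 * X6 * a2 * h1 * x * y * z + X5 * X6 * a3 * h0 * x * y * z + X5 * X6 * a4 * h7 * x * y * z * z + X5 * X6 * a5 * h6 * x * y * z * z + X5 * X6 * a6 * h5 * x * y * z * z + X5 * X6 * a7 * h4 * x * y * z * z + X5 * X7 * a0 * h2 * x * y *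 z + X5 * X7 * a1 * h3 * x * x * y * z + X5 * X7 * a2 * h0 * x * y * z + X5 * X7 * a3 * h1 * x * x * y * z + X5 * X7 * a4 * h6 * x * y * z * z + X5 * X7 * a5 * h7 * x * x * y * z * z + X5 * X7 * a6 * h4 * x * y * z * z + X5 * X7 * a7 * h5 * x * x * y * z * z + X6 * X7 * a0 * h1 * x * y * z + X6 * X7 * a1 * h0 * x * y * z + X6 * X7 * a2 * h3 * x * y * y * z + X6 * X7 * a3 * h2 * x * y * y * z + X6 * X7 * a4 * h5 * x * y * z * z + X6 * X7 * a5 * h4 * x * y * z * z + X6 * X7 * a6 * h7 * x * y * y * z * z + X6 * X7 * a7 * h6 * x * y * y * z * z)).
ring.
Qed.

Lemma idB_s (x y z a0 a1 a2 a3 a4 a5 a6 a7 X0 X1 X2 X3 X4 X5 X6 X7 k0 k1 k2 k3 k4 k5 k6 k7 : K) :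
  (Q8 x y z a0 a1 a2 a3 a4 a5 a6 a7 (m8_0 x y z X0 X1 X2 X3 X4 X5 X6 X7 k0 k1 k2 k3 k4 k5 k6 k7) (m8_1 x y z X0 X1 X2 X3 X4 X5 X6 X7 k0 k1 k2 k3 k4 k5 k6 k7) (m8_2 x y z X0 X1 X2 X3 X4 X5 X6 X7 k0 k1 k2 k3 k4 k5 k6 k7) (m8_3 x y z X0 X1 X2 X3 X4 X5 X6 X7 k0 k1 k2 k3 k4 k5 k6 k7) (m8_4 x y z X0 X1 X2 X3 X4 X5 X6 X7 k0 k1 k2 k3 k4 k5 k6 k7) (m8_5 x y z X0 X1 X2 X3 X4 X5 X6 X7 k0 k1 k2 k3 k4 k5 k6 k7) (m8_6 x y z X0 X1 X2 X3 X4 X5 X6 X7 k0 k1 k2 k3 k4 k5 k6 k7) (m8_7 x y z X0 X1 X2 X3 X4 X5 X6 X7 k0 k1 k2 k3 k4 k5 k6 k7)) = (Q8 x y z X0 X1 X2 X3 X4 X5 X6 X7 (m8_0 x y z a0 a1 a2 a3 a4 a5 a6 a7 k0 k1 k2 k3 k4 k5 k6 k7) (m8_1 x y z a0 a1 a2 a3 a4 a5 a6 a7 k0 k1 k2 k3 k4 k5 k6 k7) (m8_2 x y z a0 a1 a2 a3 a4 a5 a6 a7 k0 k1 k2 k3 k4 k5 k6 k7) (m8_3 x y z a0 a1 a2 a3 a4 a5 a6 a7 k0 k1 k2 k3 k4 k5 k6 k7) (m8_4 x y z a0 a1 a2 a3 a4 a5 a6 a7 k0 k1 k2 k3 k4 k5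 k6 k7) (m8_5 x y z a0 a1 a2 a3 a4 a5 a6 a7 k0 k1 k2 k3 k4 k5 k6 k7) (m8_6 x y z a0 a1 a2 a3 a4 a5 a6 a7 k0 k1 k2 k3 k4 k5 k6 k7) (m8_7 x y z a0 a1 a2 a3 a4 a5 a6 a7 k0 k1 k2 k3 k4 k5 k6 k7)).
Proof.
rewrite /Q8 /m8_0 /m8_1 /m8_2 /m8_3 /m8_4 /m8_5 /m8_6 /m8_7.
ring.
Qed.

Lemma idC_s (x y z a0 a1 a2 a3 a4 a5 a6 a7 k0 k1 k2 k3 k4 k5 k6 k7 : K) :
  (Q8 x y z (m8_0 x y z a0 a1 a2 a3 a4 a5 a6 a7 k0 k1 k2 k3 k4 k5 k6 k7) (m8_1 x y z a0 a1 a2 a3 a4 a5 a6 a7 k0 k1 k2 k3 k4 k5 k6 k7) (m8_2 x y z a0 a1 a2 a3 a4 a5 a6 a7 k0 k1 k2 k3 k4 k5 k6 k7) (m8_3 x y z a0 a1 a2 a3 a4 a5 a6 a7 k0 k1 k2 k3 k4 k5 k6 k7) (m8_4 x y z a0 a1 a2 a3 a4 a5 a6 a7 k0 k1 k2 k3 k4 k5 k6 k7) (m8_5 x y z a0 a1 a2 a3 a4 a5 a6 a7 k0 k1 k2 k3 k4 k5 k6 k7) (m8_6 x y z a0 a1 a2 a3 a4 a5 a6 a7 k0 k1 k2 k3 k4 k5 k6 k7) (m8_7 x y z a0 a1 a2 a3 a4 a5 a6 a7 k0 k1 k2 k3 k4 k5 k6 k7) (m8_0 x y z a0 a1 a2 a3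 a4 a5 a6 a7 k0 k1 k2 k3 k4 k5 k6 k7) (m8_1 x y z a0 a1 a2 a3 a4 a5 a6 a7 k0 k1 k2 k3 k4 k5 k6 k7) (m8_2 x y z a0 a1 a2 a3 a4 a5 a6 a7 k0 k1 k2 k3 k4 k5 k6 k7) (m8_3 x y z a0 a1 a2 a3 a4 a5 a6 a7 k0 k1 k2 k3 k4 k5 k6 k7) (m8_4 x y z a0 a1 a2 a3 a4 a5 a6 a7 k0 k1 k2 k3 k4 k5 k6 k7) (m8_5 x y z a0 a1 a2 a3 a4 a5 a6 a7 k0 k1 k2 k3 k4 k5 k6 k7) (m8_6 x y z a0 a1 a2 a3 a4 a5 a6 a7 k0 k1 k2 k3 k4 k5 k6 k7) (m8_7 x y z a0 a1 a2 a3 a4 a5 a6 a7 k0 k1 k2 k3 k4 k5 k6 k7)) = (Q8 x y z a0 a1 a2 a3 a4 a5 a6 a7 a0 a1 a2 a3 a4 a5 a6 a7) * (Q8 x y z k0 k1 k2 k3 k4 k5 k6 k7 k0 k1 k2 k3 k4 k5 k6 k7).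
Proof.
rewrite /Q8 /m8_0 /m8_1 /m8_2 /m8_3 /m8_4 /m8_5 /m8_6 /m8_7.
apply: (@c2 _ _ (2%:R * a0 * a1 * k0 * k1 * x + 2%:R * a0 * a1 * k2 * k3 * x * y + 2%:R * a0 * a1 * k4 * k5 * x * z + 2%:R * a0 * a1 * k6 * k7 * x * y * z + 2%:R * a0 * a2 * k0 * k2 * y + 2%:R * a0 * a2 * k1 * k3 * x * y + 2%:R * a0 * a2 * k4 * k6 * y * z + 2%:R * a0 * a2 * k5 * k7 * x * y * z + 2%:R * a0 * a3 * k0 * k3 * x * y + 2%:R * a0 * a3 * k1 * k2 * x * y + 2%:R * a0 * a3 * k4 * k7 * x * y * z + 2%:R * a0 * a3 * k5 * k6 * x * y * z + 2%:R * a0 * a4 * k0 * k4 * z + 2%:R * a0 * a4 * k1 * k5 * x * z + 2%:R * a0 * a4 * k2 * k6 * y * z + 2%:R * a0 * a4 * k3 * k7 * x * y * z + 2%:R * a0 * a5 * k0 * k5 * x * z + 2%:R * a0 * a5 * k1 * k4 * x * z + 2%:R * a0 * a5 * k2 * k7 * x * y * z + 2%:R * a0 * a5 * k3 * k6 * x * y * z + 2%:R * a0 * a6 * k0 * k6 * y * z + 2%:R * a0 * a6 * k1 * k7 * x * y * z + 2%:R * a0 * a6 * k2 * k4 * y * z + 2%:R * a0 * a6 * k3 * k5 * x * y * z + 2%:R * a0 * a7 * k0 * k7 * x * y * z + 2%:R * a0 * a7 * k1 * k6 * x * y * z + 2%:R * a0 * a7 * k2 * k5 * x * y * z + 2%:R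 * a0 * a7 * k3 * k4 * x * y * z + 2%:R * a1 * a2 * k0 * k3 * x * y + 2%:R * a1 * a2 * k1 * k2 * x * y + 2%:R * a1 * a2 * k4 * k7 * x * y * z + 2%:R * a1 * a2 * k5 * k6 * x * y * z + 2%:R * a1 * a3 * k0 * k2 * x * y + 2%:R * a1 * a3 * k1 * k3 * x * x * y + 2%:R * a1 * a3 * k4 * k6 * x * y * z + 2%:R * a1 * a3 * k5 * k7 * x * x * y * z + 2%:R * a1 * a4 * k0 * k5 * x * z + 2%:R * a1 * a4 * k1 * k4 * x * z + 2%:R * a1 * a4 * k2 * k7 * x * y * z + 2%:R * a1 * a4 * k3 * k6 * x * y * z + 2%:R * a1 * a5 * k0 * k4 * x * z + 2%:R * a1 * a5 * k1 * k5 * x * x * z + 2%:R * a1 * a5 * k2 * k6 * x * y * z + 2%:R * a1 * a5 * k3 * k7 * x * x * y * z + 2%:R * a1 * a6 * k0 * k7 * x * y * z + 2%:R * a1 * a6 * k1 * k6 * x * y * z + 2%:R * a1 * a6 * k2 * k5 * x * y * z + 2%:R * a1 * a6 * k3 * k4 * x * y * z + 2%:R * a1 * a7 * k0 * k6 * x * y * z + 2%:R * a1 * a7 * k1 * k7 * x * x * y * z + 2%:R * a1 * a7 * k2 * k4 * x * y * z + 2%:R * a1 * a7 * k3 * k5 * x * x * y * z + 2%:R * a2 * a3 * k0 * k1 * x * y + 2%:R * a2 * a3 * k2 * k3 * x * y * y + 2%:R * a2 * a3 * k4 * k5 * x * y * z + 2%:R * a2 * a3 * k6 * k7 * x * y *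 y * z + 2%:R * a2 * a4 * k0 * k6 * y * z + 2%:R * a2 * a4 * k1 * k7 * x * y * z + 2%:R * a2 * a4 * k2 * k4 * y * z + 2%:R * a2 * a4 * k3 * k5 * x * y * z + 2%:R * a2 * a5 * k0 * k7 * x * y * z + 2%:R * a2 * a5 * k1 * k6 * x * y * z + 2%:R * a2 * a5 * k2 * k5 * x * y * z + 2%:R * a2 * a5 * k3 * k4 * x * y * z + 2%:R * a2 * a6 * k0 * k4 * y * z + 2%:R * a2 * a6 * k1 * k5 * x * y * z + 2%:R * a2 * a6 * k2 * k6 * y * y * z + 2%:R * a2 * a6 * k3 * k7 * x * y * y * z + 2%:R * a2 * a7 * k0 * k5 * x * y * z + 2%:R * a2 * a7 * k1 * k4 * x * y * z + 2%:R * a2 * a7 * k2 * k7 * x * y * y * z + 2%:R * a2 * a7 * k3 * k6 * x * y * y * z + 2%:R * a3 * a4 * k0 * k7 * x * y * z + 2%:R * a3 * a4 * k1 * k6 * x * y * z + 2%:R * a3 * a4 * k2 * k5 * x * y * z + 2%:R * a3 * a4 * k3 * k4 * x * y * z + 2%:R * a3 * a5 * k0 * k6 * x * y * z + 2%:R * a3 * a5 * k1 * k7 * x * x * y * z + 2%:R * a3 * a5 * k2 * k4 * x * y * z + 2%:R * a3 * a5 * k3 * k5 * x * x * y * z + 2%:R * a3 * a6 * k0 * k5 * x * y * z + 2%:R * a3 * a6 * k1 * k4 * x * y * z + 2%:R * a3 * a6 * k2 * k7 * x * y * y * z + 2%:R * a3 * a6 * k3 * k6 * x * y * y * z + 2%:R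 * a3 * a7 * k0 * k4 * x * y * z + 2%:R * a3 * a7 * k1 * k5 * x * x * y * z + 2%:R * a3 * a7 * k2 * k6 * x * y * y * z + 2%:R * a3 * a7 * k3 * k7 * x * x * y * y * z + 2%:R * a4 * a5 * k0 * k1 * x * z + 2%:R * a4 * a5 * k2 * k3 * x * y * z + 2%:R * a4 * a5 * k4 * k5 * x * z * z + 2%:R * a4 * a5 * k6 * k7 * x * y * z * z + 2%:R * a4 * a6 * k0 * k2 * y * z + 2%:R * a4 * a6 * k1 * k3 * x * y * z + 2%:R * a4 * a6 * k4 * k6 * y * z * z + 2%:R * a4 * a6 * k5 * k7 * x * y * z * z + 2%:R * a4 * a7 * k0 * k3 * x * y * z + 2%:R * a4 * a7 * k1 * k2 * x * y * z + 2%:R * a4 * a7 * k4 * k7 * x * y * z * z + 2%:R * a4 * a7 * k5 * k6 * x * y * z * z + 2%:R * a5 * a6 * k0 * k3 * x * y * z + 2%:R * a5 * a6 * k1 * k2 * x * y * z + 2%:R * a5 * a6 * k4 * k7 * x * y * z * z + 2%:R * a5 * a6 * k5 * k6 * x * y * z * z + 2%:R * a5 * a7 * k0 * k2 * x * y * z + 2%:R * a5 * a7 * k1 * k3 * x * x * y * z + 2%:R * a5 * a7 * k4 * k6 * x * y * z * z + 2%:R * a5 * a7 * k5 * k7 * x * x * y * z * z + 2%:R * a6 * a7 * k0 * k1 * x * y * z + 2%:R * a6 * a7 * k2 * k3 * x * y * y * z + 2%:R * a6 * a7 * k4 * k5 * x * y * z * z + 2%:R * a6 * a7 * k6 * k7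 * x * y * y * z * z)).
ring.
Qed.

Definition cl8 (x y z : K) : 'rV[K]_8 := \row_(k < 8) nth 0 [:: 1; x; y; x * y; z; x * z; y * z; x * y * z] k.

Definition row8 (a0 a1 a2 a3 a4 a5 a6 a7 : K) : 'rV[K]_8 := \row_(k < 8) nth 0 [:: a0; a1; a2; a3; a4; a5; a6; a7] k.

Lemma row8_0 a0 a1 a2 a3 a4 a5 a6 a7 : (row8 a0 a1 a2 a3 a4 a5 a6 a7) 0 (@Ordinal 8 0 isT) = a0.
Proof. by rewrite mxE. Qed.

Lemma row8_1 a0 a1 a2 a3 a4 a5 a6 a7 : (row8 a0 a1 a2 a3 a4 a5 a6 a7) 0 (@Ordinal 8 1 isT) = a1.
Proof. by rewrite mxE. Qed.

Lemma row8_2 a0 a1 a2 a3 a4 a5 a6 a7 : (row8 a0 a1 a2 a3 a4 a5 a6 a7) 0 (@Ordinal 8 2 isT) = a2.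
Proof. by rewrite mxE. Qed.

Lemma row8_3 a0 a1 a2 a3 a4 a5 a6 a7 : (row8 a0 a1 a2 a3 a4 a5 a6 a7) 0 (@Ordinal 8 3 isT) = a3.
Proof. by rewrite mxE. Qed.

Lemma row8_4 a0 a1 a2 a3 a4 a5 a6 a7 : (row8 a0 a1 a2 a3 a4 a5 a6 a7) 0 (@Ordinal 8 4 isT) = a4.
Proof. by rewrite mxE. Qed.

Lemma row8_5 a0 a1 a2 a3 a4 a5 a6 a7 : (row8 a0 a1 a2 a3 a4 a5 a6 a7) 0 (@Ordinal 8 5 isT) = a5.
Proof. by rewrite mxE. Qed.

Lemma row8_6 a0 a1 a2 a3 a4 a5 a6 a7 : (row8 a0 a1 a2 a3 a4 a5 a6 a7) 0 (@Ordinal 8 6 isT) = a6.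
Proof. by rewrite mxE. Qed.

Lemma row8_7 a0 a1 a2 a3 a4 a5 a6 a7 : (row8 a0 a1 a2 a3 a4 a5 a6 a7) 0 (@Ordinal 8 7 isT) = a7.
Proof. by rewrite mxE. Qed.

Definition mul8 (x y z : K) (u w : 'rV[K]_8) : 'rV[K]_8 := row8 (m8_0 x y z (u 0 (@Ordinal 8 0 isT)) (u 0 (@Ordinal 8 1 isT)) (u 0 (@Ordinal 8 2 isT)) (u 0 (@Ordinal 8 3 isT)) (u 0 (@Ordinal 8 4 isT)) (u 0 (@Ordinal 8 5 isT)) (u 0 (@Ordinal 8 6 isT)) (u 0 (@Ordinal 8 7 isT)) (w 0 (@Ordinal 8 0 isT)) (w 0 (@Ordinal 8 1 isT)) (w 0 (@Ordinal 8 2 isT)) (w 0 (@Ordinal 8 3 isT)) (w 0 (@Ordinal 8 4 isT)) (w 0 (@Ordinal 8 5 isT)) (w 0 (@Ordinal 8 6 isT)) (w 0 (@Ordinal 8 7 isT))) (m8_1 x y z (u 0 (@Ordinal 8 0 isT)) (u 0 (@Ordinal 8 1 isT)) (u 0 (@Ordinal 8 2 isT)) (u 0 (@Ordinal 8 3 isT)) (u 0 (@Ordinal 8 4 isT)) (u 0 (@Ordinal 8 5 isT)) (u 0 (@Ordinal 8 6 isT)) (u 0 (@Ordinal 8 7 isT)) (w 0 (@Ordinal 8 0 isT)) (w 0 (@Ordinal 8 1 isT)) (w 0 (@Ordinal 8 2 isT)) (w 0 (@Ordinal 8 3 isT)) (w 0 (@Ordinal 8 4 isT)) (w 0 (@Ordinal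 8 5 isT)) (w 0 (@Ordinal 8 6 isT)) (w 0 (@Ordinal 8 7 isT))) (m8_2 x y z (u 0 (@Ordinal 8 0 isT)) (u 0 (@Ordinal 8 1 isT)) (u 0 (@Ordinal 8 2 isT)) (u 0 (@Ordinal 8 3 isT)) (u 0 (@Ordinal 8 4 isT)) (u 0 (@Ordinal 8 5 isT)) (u 0 (@Ordinal 8 6 isT)) (u 0 (@Ordinal 8 7 isT)) (w 0 (@Ordinal 8 0 isT)) (w 0 (@Ordinal 8 1 isT)) (w 0 (@Ordinal 8 2 isT)) (w 0 (@Ordinal 8 3 isT)) (w 0 (@Ordinal 8 4 isT)) (w 0 (@Ordinal 8 5 isT)) (w 0 (@Ordinal 8 6 isT)) (w 0 (@Ordinal 8 7 isT))) (m8_3 x y z (u 0 (@Ordinal 8 0 isT)) (u 0 (@Ordinal 8 1 isT)) (u 0 (@Ordinal 8 2 isT)) (u 0 (@Ordinal 8 3 isT)) (u 0 (@Ordinal 8 4 isT)) (u 0 (@Ordinal 8 5 isT)) (u 0 (@Ordinal 8 6 isT)) (u 0 (@Ordinal 8 7 isT)) (w 0 (@Ordinal 8 0 isT)) (w 0 (@Ordinal 8 1 isT)) (w 0 (@Ordinal 8 2 isT)) (w 0 (@Ordinal 8 3 isT)) (w 0 (@Ordinal 8 4 isT)) (w 0 (@Ordinal 8 5 isT)) (w 0 (@Ordinal 8 6 isT)) (w 0 (@Ordinal 8 7 isT))) (m8_4 x y z (u 0 (@Ordinal 8 0 isT)) (u 0 (@Ordinal 8 1 isT)) (u 0 (@Ordinal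 8 2 isT)) (u 0 (@Ordinal 8 3 isT)) (u 0 (@Ordinal 8 4 isT)) (u 0 (@Ordinal 8 5 isT)) (u 0 (@Ordinal 8 6 isT)) (u 0 (@Ordinal 8 7 isT)) (w 0 (@Ordinal 8 0 isT)) (w 0 (@Ordinal 8 1 isT)) (w 0 (@Ordinal 8 2 isT)) (w 0 (@Ordinal 8 3 isT)) (w 0 (@Ordinal 8 4 isT)) (w 0 (@Ordinal 8 5 isT)) (w 0 (@Ordinal 8 6 isT)) (w 0 (@Ordinal 8 7 isT))) (m8_5 x y z (u 0 (@Ordinal 8 0 isT)) (u 0 (@Ordinal 8 1 isT)) (u 0 (@Ordinal 8 2 isT)) (u 0 (@Ordinal 8 3 isT)) (u 0 (@Ordinal 8 4 isT)) (u 0 (@Ordinal 8 5 isT)) (u 0 (@Ordinal 8 6 isT)) (u 0 (@Ordinal 8 7 isT)) (w 0 (@Ordinal 8 0 isT)) (w 0 (@Ordinal 8 1 isT)) (w 0 (@Ordinal 8 2 isT)) (w 0 (@Ordinal 8 3 isT)) (w 0 (@Ordinal 8 4 isT)) (w 0 (@Ordinal 8 5 isT)) (w 0 (@Ordinal 8 6 isT)) (w 0 (@Ordinal 8 7 isT))) (m8_6 x y z (u 0 (@Ordinal 8 0 isT)) (u 0 (@Ordinal 8 1 isT)) (u 0 (@Ordinal 8 2 isT)) (u 0 (@Ordinal 8 3 isT)) (u 0 (@Ordinal 8 4 isT)) (u 0 (@Ordinal 8 5 isT)) (u 0 (@Ordinal 8 6 isT)) (u 0 (@Ordinal 8 7 isT))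 (w 0 (@Ordinal 8 0 isT)) (w 0 (@Ordinal 8 1 isT)) (w 0 (@Ordinal 8 2 isT)) (w 0 (@Ordinal 8 3 isT)) (w 0 (@Ordinal 8 4 isT)) (w 0 (@Ordinal 8 5 isT)) (w 0 (@Ordinal 8 6 isT)) (w 0 (@Ordinal 8 7 isT))) (m8_7 x y z (u 0 (@Ordinal 8 0 isT)) (u 0 (@Ordinal 8 1 isT)) (u 0 (@Ordinal 8 2 isT)) (u 0 (@Ordinal 8 3 isT)) (u 0 (@Ordinal 8 4 isT)) (u 0 (@Ordinal 8 5 isT)) (u 0 (@Ordinal 8 6 isT)) (u 0 (@Ordinal 8 7 isT)) (w 0 (@Ordinal 8 0 isT)) (w 0 (@Ordinal 8 1 isT)) (w 0 (@Ordinal 8 2 isT)) (w 0 (@Ordinal 8 3 isT)) (w 0 (@Ordinal 8 4 isT)) (w 0 (@Ordinal 8 5 isT)) (w 0 (@Ordinal 8 6 isT)) (w 0 (@Ordinal 8 7 isT))).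

Lemma bl8E x y z (u w : 'rV[K]_8) : bl (diag_mx (cl8 x y z)) u w = Q8 x y z (u 0 (@Ordinal 8 0 isT)) (u 0 (@Ordinal 8 1 isT)) (u 0 (@Ordinal 8 2 isT)) (u 0 (@Ordinal 8 3 isT)) (u 0 (@Ordinal 8 4 isT)) (u 0 (@Ordinal 8 5 isT)) (u 0 (@Ordinal 8 6 isT)) (u 0 (@Ordinal 8 7 isT)) (w 0 (@Ordinal 8 0 isT)) (w 0 (@Ordinal 8 1 isT)) (w 0 (@Ordinal 8 2 isT)) (w 0 (@Ordinal 8 3 isT)) (w 0 (@Ordinal 8 4 isT)) (w 0 (@Ordinal 8 5 isT)) (w 0 (@Ordinal 8 6 isT)) (w 0 (@Ordinal 8 7 isT)).
Proof. rewrite bl_diag sum8 !mxE /= /Q8; ring. Qed.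

Lemma idA x y z (a X h : 'rV[K]_8) :
  bl (diag_mx (cl8 x y z)) a (mul8 x y z X (mul8 x y z X h)) =
  bl (diag_mx (cl8 x y z)) X X * bl (diag_mx (cl8 x y z)) a h.
Proof. rewrite !bl8E; rewrite /mul8 !row8_0 !row8_1 !row8_2 !row8_3 !row8_4 !row8_5 !row8_6 !row8_7. exact: idA_s. Qed.

Lemma idB x y z (a X k : 'rV[K]_8) :
  bl (diag_mx (cl8 x y z)) a (mul8 x y z X k) = bl (diag_mx (cl8 x y z)) X (mul8 x y z a k).
Proof. rewrite !bl8E; rewrite /mul8 !row8_0 !row8_1 !row8_2 !row8_3 !row8_4 !row8_5 !row8_6 !row8_7. exact: idB_s. Qed.

Lemma idC x y z (a k : 'rV[K]_8) :
  bl (diag_mx (cl8 x y z)) (mul8 x y z a k) (mul8 x y z a k) =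
  bl (diag_mx (cl8 x y z)) a a * bl (diag_mx (cl8 x y z)) k k.
Proof. rewrite !bl8E; rewrite /mul8 !row8_0 !row8_1 !row8_2 !row8_3 !row8_4 !row8_5 !row8_6 !row8_7. exact: idC_s. Qed.

End P8.


Section P8b.
Variable K : fieldType.
Hypothesis two0 : (2%:R : K) = 0.

Lemma cl8_neq0 (x y z : K) k : x != 0 -> y != 0 -> z != 0 -> cl8 x y z 0 k != 0.
Proof.
move=> x0 y0 z0; rewrite mxE.
by case: k => [[|[|[|[|[|[|[|[|k]]]]]]]] Hk] //=; rewrite ?oner_neq0 ?mulf_neq0.
Qed.

Lemma Met_cl8 (x y z : K) : x != 0 -> y != 0 -> z != 0 ->
  (exists w0, w0 != 0 /\ bl (diag_mx (cl8 x y z)) w0 w0 = 0) -> Met (diag_mx (cl8 x y z)).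
Proof.
move=> x0 y0 z0 [w0 [w0nz w0q]] X HX; apply/eqP; apply: contraT => kap.
have H0 : forall h, bl (diag_mx (cl8 x y z)) w0 h = 0.
  move=> h; have e := idA two0 x y z w0 X h.
  rewrite idB (HX _) in e; last by rewrite (idC two0 x y z) w0q mul0r.
  by move/esym/eqP: e; rewrite mulf_eq0 (negbTE kap) => /eqP.
suff : w0 = 0 by move/eqP; rewrite (negbTE w0nz).
apply/rowP => k.
have := H0 (delta_mx 0 k); rewrite /bl mul_mx_diag trmx_delta -colE !mxE => /eqP.
have := cl8_neq0 k x0 y0 z0; rewrite mxE => /negbTE c0; rewrite mulf_eq0 c0 orbF => /eqP ->; by rewrite ?mxE.
Qed.

Lemma pf4g (y z : K) (i : 'I_4) : pfister [:: y; z] i i = nth 0 [:: 1; y; z; y * z] i.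
Proof.
have E : forall (i : 'I_2) (j : 'I_2) k (h : (k < 4)%N), (i * 2 + j)%N = k ->
   @Ordinal 4 k h = mxtens_index (i, j) by move=> i' j k h e; apply: val_inj.
case: i => [[|[|[|[|i]]]] Hi] //.
- rewrite (E (@Ordinal 2 0 isT) (@Ordinal 2 0 isT)) //.
  by rewrite /= !tensmxE /pf1 !mxE /= !mulr1n !mul1r ?mulr1.
- rewrite (E (@Ordinal 2 0 isT) (@Ordinal 2 1 isT)) //.
  by rewrite /= !tensmxE /pf1 !mxE /= !mulr1n !mul1r ?mulr1.
- rewrite (E (@Ordinal 2 1 isT) (@Ordinal 2 0 isT)) //.
  by rewrite /= !tensmxE /pf1 !mxE /= !mulr1n !mul1r ?mulr1.
- rewrite (E (@Ordinal 2 1 isT) (@Ordinal 2 1 isT)) //.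
  by rewrite /= !tensmxE /pf1 !mxE /= !mulr1n !mul1r ?mulr1 mulrC.
Qed.

Lemma pf8g (x y z : K) (i : 'I_8) :
  pfister [:: x; y; z] i i = nth 0 [:: 1; x; y; x * y; z; x * z; y * z; x * y * z] i.
Proof.
have E : forall (i : 'I_4) (j : 'I_2) k (h : (k < 8)%N), (i * 2 + j)%N = k ->
   @Ordinal 8 k h = mxtens_index (i, j) by move=> i' j k h e; apply: val_inj.
case: i => [[|[|[|[|[|[|[|[|i]]]]]]]] Hi] //.
- by rewrite (E (@Ordinal 4 0 isT) (@Ordinal 2 0 isT)) // tensmxE pf4g /pf1 !mxE /= !mulr1n ?mul1r ?mulr1.
- by rewrite (E (@Ordinal 4 0 isT) (@Ordinal 2 1 isT)) // tensmxE pf4g /pf1 !mxE /= !mulr1n ?mul1r ?mulr1.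
- by rewrite (E (@Ordinal 4 1 isT) (@Ordinal 2 0 isT)) // tensmxE pf4g /pf1 !mxE /= !mulr1n ?mul1r ?mulr1.
- by rewrite (E (@Ordinal 4 1 isT) (@Ordinal 2 1 isT)) // tensmxE pf4g /pf1 !mxE /= !mulr1n ?mul1r ?mulr1 mulrC.
- by rewrite (E (@Ordinal 4 2 isT) (@Ordinal 2 0 isT)) // tensmxE pf4g /pf1 !mxE /= !mulr1n ?mul1r ?mulr1.
- by rewrite (E (@Ordinal 4 2 isT) (@Ordinal 2 1 isT)) // tensmxE pf4g /pf1 !mxE /= !mulr1n ?mul1r ?mulr1 mulrC.
- by rewrite (E (@Ordinal 4 3 isT) (@Ordinal 2 0 isT)) // tensmxE pf4g /pf1 !mxE /= !mulr1n ?mul1r ?mulr1.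
- by rewrite (E (@Ordinal 4 3 isT) (@Ordinal 2 1 isT)) // tensmxE pf4g /pf1 !mxE /= !mulr1n ?mul1r ?mulr1 mulrC mulrA.
Qed.

Lemma pf8E (x y z : K) : (pfister [:: x; y; z] : 'M_8) = diag_mx (cl8 x y z).
Proof.
apply/matrixP => i j; rewrite (@pfister_diag _ [:: x; y; z] i j) (pf8g x y z i) [RHS]mxE mxE.
by rewrite mulr_natl.
Qed.

End P8b.


Section Transfer.
Variable F : fieldType.

Lemma tens_row00 m n (x : 'rV[F]_m) (u : 'rV[F]_n) i j :
  (x *t u) 0 (mxtens_index (i, j)) = x 0 i * u 0 j.
Proof. by rewrite -tensmxE; congr ((x *t u) _ _); apply: val_inj. Qed.

Lemma tens11 (a b : 'M[F]_1) : (a *t b) 0 0 = a 0 0 * b 0 0.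
Proof. by rewrite -tensmxE; congr ((a *t b) _ _); apply: val_inj. Qed.

Lemma bl_tens m n (A : 'M[F]_m) (C : 'M[F]_n) (x y : 'rV_m) (u w : 'rV_n) :
  bl (A *t C) (x *t u) (y *t w) = bl A x y * bl C u w.
Proof.
rewrite /bl; change ((((x *t u) *m (A *t C)) *m ((y *t w)^T)) (0 : 'I_(1*1)) (0 : 'I_(1*1)) = (x *m A *m y^T) 0 0 * (u *m C *m w^T) 0 0).
by rewrite trmx_tens !tensmx_mul tens11.
Qed.

Definition o20 : 'I_2 := @Ordinal 2 0 isT.
Definition o21 : 'I_2 := @Ordinal 2 1 isT.
Definition emb (x1 x2 : 'rV[F]_4) : 'rV[F]_(4 * 2) :=
  x1 *t (delta_mx 0 o20 : 'rV_2) + x2 *t (delta_mx 0 o21 : 'rV_2).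

Lemma bl_pf1 (a : F) (i j : 'I_2) : bl (pf1 a) (delta_mx 0 i) (delta_mx 0 j) = pf1 a i j.
Proof. by rewrite /bl trmx_delta -colE mxE -rowE mxE. Qed.

Lemma bl_emb (B : 'M[F]_4) alpha x1 x2 y1 y2 :
  bl (B *t pf1 alpha) (emb x1 x2) (emb y1 y2) = bl B x1 y1 + alpha * bl B x2 y2.
Proof.
rewrite /emb !blDl !blDr !bl_tens !bl_pf1 /pf1 !mxE /=.
by rewrite !mulr1n !mulr0n !mulr0 !addr0 add0r mulr1 mulrC.
Qed.

Lemma emb_entry x1 x2 i :
  emb x1 x2 0 (mxtens_index (i, o20)) = x1 0 i /\ emb x1 x2 0 (mxtens_index (i, o21)) = x2 0 i.
Proof.
rewrite /emb !mxE !mxtens_indexK /= !mulr1 !mulr0 addr0 add0r.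
by split; congr fun_of_matrix; apply: val_inj.
Qed.

Lemma emb_surj (X : 'rV[F]_(4*2)) :
  X = emb (\row_i X 0 (mxtens_index (i, o20))) (\row_i X 0 (mxtens_index (i, o21))).
Proof.
apply/rowP => k; case: (mxtens_indexP k) => i j.
have [e1 e2] := emb_entry (\row_i X 0 (mxtens_index (i, o20))) (\row_i X 0 (mxtens_index (i, o21))) i.
case: j => [[|[|j]] Hj] //.
- have -> : Ordinal Hj = o20 by apply: val_inj.
  by rewrite e1 mxE.
- have -> : Ordinal Hj = o21 by apply: val_inj.
  by rewrite e2 mxE.
Qed.

Lemma emb_eq0 x : emb x 0 = 0 -> x = 0.
Proof.
move=> h; apply/rowP => i; have [e1 _] := emb_entry x 0 i.
by rewrite -e1 h !mxE.
Qed.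

Lemma pdim8 (s : seq F) : pdim s = (4 * 2)%N -> exists x y z, s = [:: x; y; z].
Proof.
case: s => [|x [|y [|z [|t s]]]] //=; first by exists x, y, z.
have := pdim_gt0 s; move: (pdim s) => n; lia.
Qed.

End Transfer.


Lemma quad_decomp (F : fieldType) (L : fieldExtType F) (r : L) :
  \dim {:L} = 2%N -> (forall a : F, r != a%:A) ->
  forall l : L, exists a b : F, l = a%:A + b%:A * r.
Proof.
move=> dimL rnF l.
have fr : free [:: r; 1].
  rewrite free_cons seq1_free oner_neq0 andbT span_seq1.
  apply/vlineP => -[k hk]; by move: (rnF k); rewrite hk eqxx.
have : <<[:: r; 1%R]>>%VS == fullv.
  rewrite eqEdim subvf /=; move/eqP: fr => ->; by rewrite dimL.
move/eqP => hX; have : l \in <<[:: r; 1%R]>>%VS by rewrite hX memvf.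
rewrite span_cons span_seq1 => /memv_addP [u /vlineP [b ->] [w /vlineP [a ->] ->]].
exists a, b; rewrite addrC; congr (_ + _); by rewrite -scalerAl mul1r.
Qed.

Lemma vec_decomp (F : fieldType) (L : fieldExtType F) (r : L) n
  (dec : forall l : L, exists a b : F, l = a%:A + b%:A * r) (X : 'rV[L]_n) :
  exists x1 x2 : 'rV[F]_n, X = map_mx (in_alg L) x1 + r *: map_mx (in_alg L) x2.
Proof.
have ex : forall l, exists p : F * F, l == p.1%:A + p.2%:A * r.
  by move=> l; have [a [b ->]] := dec l; exists (a, b).
pose f l := xchoose (ex l).
exists (\row_i (f (X 0 i)).1), (\row_i (f (X 0 i)).2); apply/rowP => i; rewrite !mxE.
by have /eqP {1}-> := xchooseP (ex (X 0 i)); rewrite mulrC.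
Qed.

Lemma blL_decomp (F : fieldType) (L : fieldExtType F) (r : L) (alpha : F) n (B : 'M[F]_n) x1 x2 y1 y2 :
  r ^+ 2 = alpha%:A ->
  bl (map_mx (in_alg L) B) (map_mx (in_alg L) x1 + r *: map_mx (in_alg L) x2)
                           (map_mx (in_alg L) y1 + r *: map_mx (in_alg L) y2)
  = in_alg L (bl B x1 y1 + alpha * bl B x2 y2) + r * in_alg L (bl B x1 y2 + bl B x2 y1).
Proof.
move=> Hr; rewrite !blDl !blDr !blZl !blZr !bl_map.
rewrite !rmorphD !rmorphM /= -Hr; ring.
Qed.

Lemma indep (F : fieldType) (L : fieldExtType F) (r : L) :
  (forall a : F, r != a%:A) -> forall a b : F, in_alg L a + r * in_alg L b = 0 -> a = 0 /\ b = 0.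
Proof.
move=> rnF a b h.
have [b0|b0] := eqVneq b 0.
  by move: h; rewrite b0 rmorph0 mulr0 addr0 => /eqP; rewrite fmorph_eq0 => /eqP.
exfalso; move/eqP: (rnF (- a / b)); apply.
have bL : in_alg L b != 0 by rewrite fmorph_eq0.
rewrite -[(-a / b)%:A]/(in_alg L (- a / b)) fmorph_div rmorphN /=.
apply: (mulIf bL); rewrite divfK //.
by apply/eqP; rewrite -subr_eq0 opprK addrC h.
Qed.

Unset Implicit Arguments.

Theorem lemma5p4 (F : fieldType) (L : fieldExtType F)
    (B : 'M[F]_4) (alpha : F) (r : L) :
  (2%N \in [pchar F])%R ->
  bf_symmetric B -> bf_isotropic B ->
  alpha != 0 -> ~ (exists x : F, x ^+ 2 = alpha) ->
  (* L = F(sqrt alpha): a quadratic extension containing a square root r of alpha *)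
  \dim {:L} = 2%N -> r ^+ 2 = alpha%:A ->
  bf_is_pfister (B *t pf1 alpha) ->
  bf_similar_to_pfister (map_mx (in_alg L) B).
Proof.
move=> H2 Hsym [v [vnz vq]] a0 Hns dimL Hr [s [hs [e [P [uP HP]]]]].
have two0 : (2%:R : F) = 0 := pcharf0 H2.
have two0L : (2%:R : L) = 0 by rewrite -(rmorph_nat (in_alg L)) two0 rmorph0.
have sB : B^T = B := Hsym.
have [x [y [z es]]] := pdim8 e.
subst s.
have ee : e = erefl by apply: eq_irrelevance.
rewrite ee castmx_id in HP.
case/andP: hs => x0 /andP [y0 /andP [z0 _]].
have HPD : B *t pf1 alpha = P *m diag_mx (cl8 x y z) *m P^T by rewrite -pf8E.
set D := diag_mx (cl8 x y z) in HPD.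
set Phi := B *t pf1 alpha in HPD.
have blPhi : forall X Y, bl Phi X Y = bl D (X *m P) (Y *m P) by move=> X Y; rewrite HPD bl_iso.
have vqb : bl B v v = 0 by rewrite /bl vq mxE.
have Diso : exists w0, w0 != 0 /\ bl D w0 w0 = 0.
  exists (emb v 0 *m P); split.
  - apply: contra vnz => /eqP h.
    have : emb v 0 = 0 by rewrite -(mulmxK uP (emb v 0)) h mul0mx.
    by move/emb_eq0 => ->.
  - by rewrite -blPhi bl_emb vqb bl0l mulr0 addr0.
have MetD := Met_cl8 two0 x0 y0 z0 Diso.
have MetPhi : Met Phi by rewrite HPD; apply: Met_iso.
have uD : D \in unitmx.
  rewrite /D -pf8E; apply: (@pfister_unit _ [:: x; y; z]); by rewrite /= x0 y0 z0.
have uPhi : Phi \in unitmx by rewrite HPD !unitmx_mul unitmx_tr uP uD.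
have blrow : forall n (A : 'M[F]_n) u k, bl A u (delta_mx 0 k) = (u *m A) 0 k.
  by move=> n A u k; rewrite /bl trmx_delta -colE mxE.
have [xa hxa] : exists xa, bl B xa xa != 0.
  case: (classic (exists xa, bl B xa xa != 0)) => // Hn; exfalso.
  have Hq : forall xa, bl B xa xa = 0.
    by move=> xa; apply/eqP; apply: contraT => h; case: Hn; exists xa.
  pose Y := (delta_mx 0 0 : 'rV[F]_(4*2)) *m invmx P.
  have : bl Phi Y Y = 0 by rewrite (emb_surj Y) bl_emb !Hq mulr0 addr0.
  rewrite blPhi /Y mulmxKV // blrow -rowE mxE /D mxE mxE /=.
  by move/eqP; rewrite mulr1n oner_eq0.
have uB : B \in unitmx.
  apply: contraT => nuB; exfalso.
  have : kermx B != 0 by rewrite kermx_eq0 row_free_unit.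
  move=> kB.
  have [i hi] : exists i, row i (kermx B) != 0.
    apply/existsP; move: kB; apply: contraLR; rewrite negb_exists => /forallP H.
    apply/negPn/eqP/row_matrixP => i; rewrite row0; apply/eqP; by move: (H i); rewrite negbK.
  set xk := row i (kermx B) in hi.
  have xkB : xk *m B = 0 by rewrite /xk -row_mul mulmx_ker row0.
  have : emb xk 0 *m Phi = 0.
    apply/rowP => k; rewrite -blrow (emb_surj (delta_mx 0 k)) bl_emb bl0l mulr0 addr0.
    by rewrite /bl xkB mul0mx !mxE.
  move/(congr1 (mulmx^~ (invmx Phi))); rewrite mulmxK // mul0mx => /emb_eq0 h0.
  by move/eqP: hi; apply.
set BL := map_mx (in_alg L) B.
have sBL : BL^T = BL by rewrite /BL map_trmx sB.
have uBL : BL \in unitmx by rewrite /BL map_unitmx.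
have rnF : forall a : F, r != a%:A.
  move=> a; apply/eqP => ra; apply: Hns; exists a; apply: (fmorph_inj (in_alg L)).
  by rewrite rmorphXn /= -ra Hr.
have dec := quad_decomp dimL rnF.
have bLd := fun x1 x2 y1 y2 => @blL_decomp F L r alpha 4 B x1 x2 y1 y2 Hr.
have MetBL : Met BL.
  move=> X HX; have [x1 [x2 eX]] := vec_decomp dec X; subst X.
  have key : bl B x1 x1 + alpha * bl B x2 x2 = 0.
    rewrite -bl_emb; apply: MetPhi => Y8; rewrite (emb_surj Y8) !bl_emb.
    move: (\row_i Y8 0 (mxtens_index (i, o20))) (\row_i Y8 0 (mxtens_index (i, o21))) => y1 y2 HY.
    have := HX (map_mx (in_alg L) y1 + r *: map_mx (in_alg L) y2).
    rewrite !bLd HY (bl_sym y2 y1 sB) rmorph0 add0r.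
    have -> : bl B y1 y2 + bl B y1 y2 = 0 by rewrite -mulr2n -mulr_natl two0 mul0r.
    by rewrite rmorph0 mulr0 => /(_ erefl) /(indep rnF) [].
  rewrite bLd key (bl_sym x2 x1 sB).
  have -> : bl B x1 x2 + bl B x1 x2 = 0 by rewrite -mulr2n -mulr_natl two0 mul0r.
  by rewrite !rmorph0 mulr0 addr0.
have NAL : exists xl, bl BL xl xl != 0.
  by exists (map_mx (in_alg L) xa); rewrite /BL bl_map fmorph_eq0.
have vLnz : map_mx (in_alg L) v != 0 by rewrite map_mx_eq0.
have vLq : bl BL (map_mx (in_alg L) v) (map_mx (in_alg L) v) = 0 by rewrite /BL bl_map vqb rmorph0.
have [lam [w' [PL [l0 w0 uPL HPL]]]] := main_K two0L sBL uBL MetBL NAL vLnz vLq.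
exists [:: 1; w']; split; first by rewrite /= oner_neq0 w0.
have e4 : pdim [:: 1; w'] = 4%N := erefl.
exists e4, lam; split => //; exists PL; split => //.
have -> : e4 = erefl by apply: eq_irrelevance.
by rewrite castmx_id HPL.
Qed.
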